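(* Let $G=(V,E)$ be an $\alpha$-expander, let $\lambda\in(0,1)$, and let $\mathbf d\in\mathbb Z^V$ be the current discrepancy vector of the expander greedy process on $G$ at some time step $t$. Consider the $(1+\beta)$-process on vertex set $V$ with $\beta=\alpha$ and weights $w_v=\deg_G(v)$ for $v\in V$, started from the same discrepancy vector $\mathbf d$. Then (a) $\Delta_{-1}(\mathbf d)\le\widetilde\Delta_{-1}(\mathbf d)$ and (b) $\Delta_{+1}(\mathbf d)\le\widetilde\Delta_{+1}(\mathbf d)$. Hence the expected one-step change of the potential in the expander greedy process satisfies $\mathbb E[\Phi(\mathbf d^{t+1})-\Phi(\mathbf d)]\le \widetilde\Delta_{-1}(\mathbf d)+\widetilde\Delta_{+1}(\mathbf d)$, where $\mathbf d^{t+1}$ is the discrepancy vector after the next step.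
   Context: $\mathrm{vol}(S)=\sum_{v\in S}\deg(v)$; $G$ is an $\alpha$-expander if for every $S\subseteq V$, $|E(S,V\setminus S)|\ge\alpha\min\{\mathrm{vol}(S),\mathrm{vol}(V\setminus S)\}$. Expander greedy process: discrepancies $d_v$ (in-degree minus out-degree among arrived edges); at each step a uniformly random edge $\{i,j\}\in E$ arrives independently, and if $d_i\ge d_j$ (ties arbitrary) it is oriented $i\to j$, so $d_i$ decreases by $1$ and $d_j$ increases by $1$. Potential: $\Phi(\mathbf d)=\sum_{v\in V}\cosh(\lambda d_v)$. With $i$ the endpoint of the arriving edge of larger discrepancy and $j$ the other: $\Delta_{-1}(\mathbf d)=\mathbb E_{\{i,j\}\sim E}[\cosh(\lambda(d_i-1))-\cosh(\lambda d_i)]$ and $\Delta_{+1}(\mathbf d)=\mathbb E_{\{i,j\}\sim E}[\cosh(\lambda(d_j+1))-\cosh(\lambda d_j)]$. The $(1+\beta)$-process with weights $w\ge 0$: two vertices $u,v$ are sampled independently, each equal to $x\in V$ with probability $w_x/\sum_{y}w_y$, and the vector $\chi_u-\chi_v$ is signed: with probability $1-\beta$ uniformly at random (so each of $u,v$ is equally likely to be the vertex receiving $+1$, the other receiving $-1$), and with probability $\beta$ greedily (the one of $u,v$ with higher discrepancy receives $-1$, the other $+1$). Let $a$ denote the vertex receiving $+1$ and $b$ the vertex receiving $-1$. Then $\widetilde\Delta_{+1}(\mathbf d)=\mathbb E[\cosh(\lambda(d_a+1))-\cosh(\lambda d_a)]$ and $\widetilde\Delta_{-1}(\mathbf d)=\mathbb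 E[\cosh(\lambda(d_b-1))-\cosh(\lambda d_b)]$, the expectations being over the sampling of $u,v$ and the signing. *)

(* Defs.v *)
From HB Require Import structures.
From mathcomp Require Import all_boot all_order all_algebra.
From mathcomp Require Import all_classical all_reals all_analysis.
Set Implicit Arguments. Unset Strict Implicit. Unset Printing Implicit Defensive.
Import Order.TTheory GRing.Theory Num.Theory.
Local Open Scope ring_scope.

Section Defs.
Variables (R : realType) (V : finType).

Definition coshR (x : R) : R := (expR x + expR (- x)) / 2.

Definition simple_graph (e : rel V) : Prop :=
  (forall x y, e x y = e y x) /\ (forall x, ~~ e x x).

Definition deg (e : rel V) (v : V) : R := (#|[set y | e v y]|)%:R.
Definition vol (e : rel V) (S : {set V}) : R := \sum_(v in S) deg e v.
(* |E(S, V \ S)| : each cut edge counted once, by its endpoint in S *)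
Definition cut_size (e : rel V) (S : {set V}) : R :=
  (#|[set p : V * V | [&& e p.1 p.2, p.1 \in S & p.2 \notin S]]|)%:R.

Definition expander (e : rel V) (alpha : R) : Prop :=
  forall S : {set V}, alpha * Num.min (vol e S) (vol e (~: S)) <= cut_size e S.

(* uniform random edge {i,j} of E: average over the 2|E| arcs (x,y) with e x y;
   each edge corresponds to exactly two arcs *)
Definition edge_mean (e : rel V) (F : V -> V -> R) : R :=
  (\sum_(p : V * V | e p.1 p.2) F p.1 p.2) / (#|[set p : V * V | e p.1 p.2]|)%:R.

Definition ch (lam : R) (z : int) : R := coshR (lam * z%:~R).

(* endpoint of larger discrepancy (ties: the first component of the arc) *)
Definition hi (d : V -> int) (x y : V) : V := if d y <= d x then x else y.
Definition lo (d : V -> int) (x y : V) : V := if d y <= d x then y else x.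

Definition Delta_m1 (e : rel V) (lam : R) (d : V -> int) : R :=
  edge_mean e (fun x y => ch lam (d (hi d x y) - 1) - ch lam (d (hi d x y))).
Definition Delta_p1 (e : rel V) (lam : R) (d : V -> int) : R :=
  edge_mean e (fun x y => ch lam (d (lo d x y) + 1) - ch lam (d (lo d x y))).

(* (1+beta)-process with weights w: u,v independent, P(u=x) = w x / sum w.
   With prob. 1-beta the sign is uniform (b = u or b = v w.p. 1/2 each),
   with prob. beta greedy (b = the one of higher discrepancy, a the other). *)
Definition wprob (w : V -> R) (x : V) : R := w x / \sum_(y : V) w y.

Definition tDelta_m1 (w : V -> R) (beta lam : R) (d : V -> int) : R :=
  \sum_(u : V) \sum_(v : V) wprob w u * wprob w v *
    ((1 - beta) / 2 * ((ch lam (d u - 1) - ch lam (d u)) + (ch lam (d v - 1) - ch lam (d v)))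
     + beta * (ch lam (d (hi d u v) - 1) - ch lam (d (hi d u v))) ).
Definition tDelta_p1 (w : V -> R) (beta lam : R) (d : V -> int) : R :=
  \sum_(u : V) \sum_(v : V) wprob w u * wprob w v *
    ((1 - beta) / 2 * ((ch lam (d v + 1) - ch lam (d v)) + (ch lam (d u + 1) - ch lam (d u)))
     + beta * (ch lam (d (lo d u v) + 1) - ch lam (d (lo d u v))) ).

Definition Phi (lam : R) (d : V -> int) : R := \sum_(v : V) ch lam (d v).

Definition step (d : V -> int) (x y : V) : V -> int :=
  fun v => d v - (v == hi d x y)%:Z + (v == lo d x y)%:Z.

Definition expected_change (e : rel V) (lam : R) (d : V -> int) : R :=
  edge_mean e (fun x y => Phi lam (step d x y) - Phi lam d).

(* discrepancy vectors reachable by the expander greedy process from 0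
   (both arcs of an edge are allowed, so ties are broken arbitrarily) *)
Inductive reachable (e : rel V) : (V -> int) -> Prop :=
| reach0 : reachable e (fun _ => 0)
| reachS d x y : reachable e d -> e x y -> reachable e (step d x y).

End Defs.

Arguments deg {R V} e v.
Arguments vol {R V} e S.
Arguments cut_size {R V} e S.

(* Main.v *)
Require Import Defs.
From HB Require Import structures.
From mathcomp Require Import all_boot all_order all_algebra.
From mathcomp Require Import all_classical all_reals all_analysis.
From mathcomp Require Import zify ring lra.
Import Order.TTheory GRing.Theory Num.Theory.
Local Open Scope ring_scope.
Section G.
Variables (R : realType) (V : finType) (e : rel V).
Hypothesis hsym : forall x y, e x y = e y x.

Lemma swap_sum (F : V -> V -> R) :
  \sum_(p : V * V | e p.1 p.2) F p.1 p.2 = \sum_(p : V * V | e p.1 p.2) F p.2 p.1.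
Proof.
rewrite (reindex_inj (h := fun p : V * V => (p.2, p.1))) /=.
  by apply: eq_bigl => p; rewrite hsym.
by move=> [a b] [c d] /= [-> ->].
Qed.

Lemma arc1 (A : V -> R) :
  \sum_(p : V * V | e p.1 p.2) A p.1 = \sum_x deg e x * A x.
Proof.
rewrite -(pair_big_dep xpredT (fun x y => e x y) (fun x y => A x)) /=.
apply: eq_bigr => x _.
rewrite (eq_bigl (fun y => y \in [set y | e x y])); last by move=> y; rewrite inE.
by rewrite sumr_const /deg mulr_natl.
Qed.

Lemma D_eq : (#|[set p : V * V | e p.1 p.2]|)%:R = \sum_x deg e x :> R.
Proof.
have -> : \sum_x (deg e x : R) = \sum_x deg e x * 1 by apply: eq_bigr => x _; rewrite mulr1.
rewrite -(arc1 (fun _ => 1)).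
rewrite (eq_bigl (fun p => p \in [set p : V * V | e p.1 p.2])); last by move=> p; rewrite inE.
by rewrite sumr_const.
Qed.

Lemma cut2 (S : {set V}) :
  \sum_(p : V * V | e p.1 p.2) ((p.1 \in S) != (p.2 \in S))%:R = 2 * cut_size e S :> R.
Proof.
have h1 : cut_size e S = \sum_(p : V * V | e p.1 p.2) ((p.1 \in S) && (p.2 \notin S))%:R :> R.
  rewrite /cut_size -sumr_const big_mkcond /= [RHS]big_mkcond /=.
  apply: eq_bigr => p _; rewrite inE.
  by case: (e p.1 p.2); case: (p.1 \in S); case: (p.2 \in S).
have h2 : cut_size e S = \sum_(p : V * V | e p.1 p.2) ((p.2 \in S) && (p.1 \notin S))%:R :> R.
  by rewrite h1 (swap_sum (fun a b => ((a \in S) && (b \notin S))%:R : R)).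
rewrite mulr2n mulrDl mul1r {1}h1 h2 -big_split /=.
apply: eq_bigr => p _.
by case: (p.1 \in S); case: (p.2 \in S); rewrite /= ?addr0 ?add0r.
Qed.

Lemma volsum (S : {set V}) : vol e S + vol e (~: S) = \sum_x deg e x :> R.
Proof.
rewrite /vol [RHS](bigID (fun x => x \in S)) /=.
congr (_ + _); apply: eq_bigl => x; by rewrite ?inE.
Qed.

Lemma volprod (S : {set V}) :
  \sum_u \sum_v deg e u * deg e v * ((u \in S) != (v \in S))%:R
  = 2 * (vol e S * vol e (~: S)) :> R.
Proof.
have hv : forall T : {set V}, vol e T = \sum_u deg e u * (u \in T)%:R :> R.
  move=> T; rewrite /vol big_mkcond /=; apply: eq_bigr => u _.
  by case: (u \in T); rewrite ?mulr1 ?mulr0.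
rewrite (_ : 2 * (vol e S * vol e (~: S)) = vol e S * vol e (~: S) + vol e (~: S) * vol e S); last ring.
rewrite !hv !mulr_suml -big_split /=.
apply: eq_bigr => u _.
rewrite !mulr_sumr -big_split /=.
apply: eq_bigr => v _. rewrite !inE.
by case: (u \in S); case: (v \in S); rewrite /= ?mulr0 ?mulr1 ?addr0 ?add0r ?mul0r ?mulrA.
Qed.

Lemma L3 (alpha : R) (S : {set V}) : 0 <= alpha ->
  alpha * Num.min (vol e S) (vol e (~: S)) <= cut_size e S ->
  alpha * (\sum_u \sum_v deg e u * deg e v * ((u \in S) != (v \in S))%:R)
  <= (\sum_x deg e x) * \sum_(p : V * V | e p.1 p.2) ((p.1 \in S) != (p.2 \in S))%:R.
Proof.
move=> ha hc.
rewrite volprod cut2 -(volsum S).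
have h1 : 0 <= (vol e S : R) by apply: sumr_ge0 => x _; exact: ler0n.
have h2 : 0 <= (vol e (~: S) : R) by apply: sumr_ge0 => x _; exact: ler0n.
move: hc; rewrite minEle; case: ifP => hle hc; nra.
Qed.
Lemma tele (K : int -> R) (lo : int) (N : nat) (a : int) :
  lo <= a <= lo + N%:Z ->
  \sum_(k < N) (lo + k%:Z < a)%R%:R * (K (lo + k%:Z + 1) - K (lo + k%:Z)) = K a - K lo.
Proof.
elim: N a => [|N IH] a ha.
  rewrite big_ord0. have -> : a = lo by lia. by rewrite subrr.
rewrite big_ord_recr /=.
have [hle|hgt] := boolP (a <= lo + N%:Z).
  have -> : (lo + N%:Z < a) = false by lia.
  rewrite mul0r addr0 IH //; lia.
have -> : (lo + N%:Z < a) = true by lia.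
have ea : a = lo + N%:Z + 1 by lia.
rewrite mul1r (eq_bigr (fun k : 'I_N => (lo + k%:Z < lo + N%:Z)%R%:R * (K (lo + k%:Z + 1) - K (lo + k%:Z)))).
  rewrite IH; last lia. rewrite ea; ring.
move=> k _; have hk := ltn_ord k.
have -> : (lo + k%:Z < a) = true by lia.
have -> : (lo + k%:Z < lo + N%:Z) = true by lia.
done.
Qed.

Lemma layer (K : int -> R) (Kmono : forall a b, a <= b -> K a <= K b) (B : nat) (a b : int) :
  - B%:Z <= a <= B%:Z -> - B%:Z <= b <= B%:Z ->
  `|K a - K b| = \sum_(k < (B + B)%N)
     ((- B%:Z + k%:Z < a) != (- B%:Z + k%:Z < b))%R%:R *
        (K (- B%:Z + k%:Z + 1) - K (- B%:Z + k%:Z)).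
Proof.
wlog hab : a b / a <= b.
  move=> H ha hb; have [h|h] := lerP a b; first exact: H.
  rewrite distrC H //; last exact: ltW.
  by apply: eq_bigr => k _; rewrite eq_sym.
move=> ha hb.
rewrite distrC ger0_norm; last by rewrite subr_ge0 Kmono.
have tb := tele K (- B%:Z) (B + B)%N b.
have ta := tele K (- B%:Z) (B + B)%N a.
rewrite (_ : K b - K a = (K b - K (- B%:Z)) - (K a - K (- B%:Z))); last ring.
rewrite -tb; last lia. rewrite -ta; last lia.
rewrite -sumrB; apply: eq_bigr => k _.
case: (boolP (- B%:Z + k%:Z < a)) => h1.
  have -> : (- B%:Z + k%:Z < b) = true by lia.
  by rewrite subrr mul0r.
by case: (boolP (- B%:Z + k%:Z < b)) => h2 /=; rewrite !(mul1r, mul0r, subr0, subrr).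
Qed.

Lemma exch3 (n : nat) (F : V -> V -> 'I_n -> R) :
  \sum_u \sum_v \sum_(k < n) F u v k = \sum_(k < n) \sum_u \sum_v F u v k.
Proof.
rewrite (eq_bigr (fun u => \sum_(k < n) \sum_v F u v k)); last by move=> u _; rewrite exchange_big.
by rewrite exchange_big.
Qed.

Lemma L1ineq (alpha : R) (K : int -> R) (d : V -> int)
  (Kmono : forall a b, a <= b -> K a <= K b) :
  0 <= alpha -> expander e alpha ->
  alpha * (\sum_u \sum_v deg e u * deg e v * `|K (d u) - K (d v)|)
  <= (\sum_x deg e x) * \sum_(p : V * V | e p.1 p.2) `|K (d p.1) - K (d p.2)|.
Proof.
move=> ha hexp.
pose B := (\sum_v `|d v|)%N.
have hb : forall v, - B%:Z <= d v <= B%:Z.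
  move=> v; have : (`|d v| <= B)%N by rewrite /B (bigD1 v) //= leq_addr.
  move=> h; lia.
pose dl (k : 'I_(B + B)) := K (- B%:Z + k%:Z + 1) - K (- B%:Z + k%:Z).
pose Sk (k : 'I_(B + B)) := [set v | - B%:Z + k%:Z < d v].
have hdl : forall k, 0 <= dl k by move=> k; rewrite subr_ge0 Kmono // lerDl.
have eL : alpha * (\sum_u \sum_v deg e u * deg e v * `|K (d u) - K (d v)|)
   = \sum_k dl k * (alpha * \sum_u \sum_v deg e u * deg e v * ((u \in Sk k) != (v \in Sk k))%:R).
  transitivity (\sum_u \sum_v \sum_k dl k * (alpha * (deg e u * deg e v * ((u \in Sk k) != (v \in Sk k))%:R))).
    rewrite mulr_sumr; apply: eq_bigr => u _; rewrite mulr_sumr; apply: eq_bigr => v _.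
    rewrite (layer _ Kmono _ _ _ (hb u) (hb v)) !mulr_sumr; apply: eq_bigr => k _.
    rewrite /dl !inE; ring.
  rewrite exch3; apply: eq_bigr => k _.
  rewrite !mulr_sumr; apply: eq_bigr => u _; rewrite !mulr_sumr; apply: eq_bigr => v _.
  done.
have eR : (\sum_x deg e x) * \sum_(p : V * V | e p.1 p.2) `|K (d p.1) - K (d p.2)|
   = \sum_k dl k * ((\sum_x deg e x) * \sum_(p : V * V | e p.1 p.2) ((p.1 \in Sk k) != (p.2 \in Sk k))%:R).
  transitivity (\sum_(p : V * V | e p.1 p.2) \sum_k dl k * ((\sum_x deg e x) * ((p.1 \in Sk k) != (p.2 \in Sk k))%:R)).
    rewrite mulr_sumr; apply: eq_bigr => p _.
    rewrite (layer _ Kmono _ _ _ (hb p.1) (hb p.2)) !mulr_sumr; apply: eq_bigr => k _.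
    rewrite /dl !inE; ring.
  rewrite exchange_big; apply: eq_bigr => k _.
  by rewrite !mulr_sumr.
rewrite eL eR; apply: ler_sum => k _; apply: ler_wpM2l => //.
exact: L3.
Qed.

Lemma lin3 (I : finType) (P : pred I) (a b c : R) (F G H : I -> R) :
  \sum_(i | P i) (a * F i + b * G i + c * H i)
  = a * \sum_(i | P i) F i + b * \sum_(i | P i) G i + c * \sum_(i | P i) H i.
Proof. by rewrite !big_split /= !mulr_sumr. Qed.

Lemma Gen (alpha : R) (H : V -> R) :
  0 < \sum_x (deg e x : R) ->
  alpha * (\sum_u \sum_v deg e u * deg e v * `|H u - H v|)
  <= (\sum_x deg e x) * \sum_(p : V * V | e p.1 p.2) `|H p.1 - H p.2| ->
  edge_mean e (fun x y => (H x + H y) / 2 - `|H x - H y| / 2)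
  <= \sum_u \sum_v wprob (deg e) u * wprob (deg e) v *
      ((1 - alpha) / 2 * (H u + H v) + alpha * ((H u + H v) / 2 - `|H u - H v| / 2)).
Proof.
set D := \sum_x deg e x => hD hL1.
have hD0 : D != 0 by rewrite gt_eqF.
set A := \sum_(p : V * V | e p.1 p.2) `|H p.1 - H p.2|.
set Bs := \sum_u \sum_v deg e u * deg e v * `|H u - H v|.
set C := \sum_x deg e x * H x.
have eL : edge_mean e (fun x y => (H x + H y) / 2 - `|H x - H y| / 2) = (C - A / 2) / D.
  rewrite /edge_mean D_eq -/D; congr (_ / _).
  rewrite (eq_bigr (fun p : V * V => 2^-1 * H p.1 + 2^-1 * H p.2 + (- 2^-1) * `|H p.1 - H p.2|)); last by move=> p _; field.
  rewrite lin3 (swap_sum (fun a b => H b)) /= arc1 -/C -/A; by field; rewrite ?hD0.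
have eR : \sum_u \sum_v wprob (deg e) u * wprob (deg e) v *
      ((1 - alpha) / 2 * (H u + H v) + alpha * ((H u + H v) / 2 - `|H u - H v| / 2))
     = (D * C - alpha * Bs / 2) / (D * D).
  rewrite (eq_bigr (fun u => (2 * D * D)^-1 * (\sum_v deg e u * deg e v * H u) + (2 * D * D)^-1 * (\sum_v deg e u * deg e v * H v) + (- alpha / (2 * D * D)) * (\sum_v deg e u * deg e v * `|H u - H v|))); last first.
    move=> u _; rewrite -lin3; apply: eq_bigr => v _; rewrite /wprob -/D; by field; rewrite ?hD0.
  rewrite lin3 -/Bs.
  have e1 : \sum_u \sum_v deg e u * deg e v * H u = D * C.
    rewrite mulrC /C mulr_suml; apply: eq_bigr => u _.
    rewrite /D mulr_sumr; apply: eq_bigr => v _; ring.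
  have e2 : \sum_u \sum_v deg e u * deg e v * H v = D * C.
    rewrite exchange_big /= -e1; apply: eq_bigr => u _; apply: eq_bigr => v _; ring.
  rewrite e1 e2; by field; rewrite ?hD0.
rewrite eL eR -subr_ge0.
have -> : (D * C - alpha * Bs / 2) / (D * D) - (C - A / 2) / D = (D * A - alpha * Bs) / (2 * (D * D)).
  by field; rewrite ?hD0.
apply: divr_ge0; first by rewrite subr_ge0.
by rewrite mulr_ge0 // mulr_ge0 // ltW.
Qed.

Lemma mean_ext (F G : V -> V -> R) : (forall x y, e x y -> F x y = G x y) ->
  edge_mean e F = edge_mean e G.
Proof. by move=> h; rewrite /edge_mean; congr (_ / _); apply: eq_bigr => p /h. Qed.

Lemma mean_add (F G : V -> V -> R) :
  edge_mean e F + edge_mean e G = edge_mean e (fun x y => F x y + G x y).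
Proof. by rewrite /edge_mean -mulrDl big_split. Qed.
End G.

Section C.
Variables (R : realType) (lam : R).
Hypothesis hlam : 0 <= lam.

Lemma chE (z c : int) : ch lam (z + c) =
  (expR (lam * z%:~R) * expR (lam * c%:~R) + expR (- (lam * z%:~R)) * expR (- (lam * c%:~R))) / 2.
Proof. by rewrite /ch /coshR intrD mulrDr opprD !expRD. Qed.

Lemma ch0 (z : int) : ch lam z = ch lam (z + 0).
Proof. by rewrite addr0. Qed.

Lemma expmono (a b : int) : a <= b ->
  expR (lam * a%:~R) <= expR (lam * b%:~R) /\ expR (- (lam * b%:~R)) <= expR (- (lam * a%:~R)).
Proof.
move=> hab; have h : lam * a%:~R <= lam * b%:~R by rewrite ler_wpM2l // ler_int.
by rewrite !ler_expR lerN2.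
Qed.

Lemma f_anti (a b : int) : a <= b -> ch lam (b - 1) - ch lam b <= ch lam (a - 1) - ch lam a.
Proof.
move=> hab; rewrite (ch0 a) (ch0 b) !chE !mulr0 oppr0 expR0.
have [h1 h2] := expmono a b hab.
have h3 : expR (lam * (-1 : int)%:~R) <= 1 by rewrite expR_le1 mulrN1 oppr_le0.
have h4 : 1 <= expR (- (lam * (-1 : int)%:~R)) by apply: le_trans (expR_ge1Dx _); rewrite mulrN1 opprK lerDl.
nra.
Qed.

Lemma g_mono (a b : int) : a <= b -> ch lam (a + 1) - ch lam a <= ch lam (b + 1) - ch lam b.
Proof.
move=> hab; rewrite (ch0 a) (ch0 b) !chE !mulr0 oppr0 expR0.
have [h1 h2] := expmono a b hab.
have h3 : 1 <= expR (lam * (1 : int)%:~R) by apply: le_trans (expR_ge1Dx _); rewrite mulr1 lerDl.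
have h4 : expR (- (lam * (1 : int)%:~R)) <= 1 by rewrite expR_le1 mulr1 oppr_le0.
nra.
Qed.
End C.

Lemma mid_l (R : realType) (a b : R) : a <= b -> a = (a + b) / 2 - `|a - b| / 2.
Proof. move=> h; rewrite distrC ger0_norm ?subr_ge0 //; lra. Qed.
Lemma mid_r (R : realType) (a b : R) : b <= a -> b = (a + b) / 2 - `|a - b| / 2.
Proof. move=> h; rewrite ger0_norm ?subr_ge0 //; lra. Qed.

Theorem mainTheorem3 (R : realType) (V : finType) (e : rel V) (alpha lam : R)
    (d : V -> int) :
  simple_graph e ->
  (exists x y, e x y) ->
  0 <= alpha <= 1 ->
  expander e alpha ->
  0 < lam < 1 ->
  reachable e d ->
  [/\ Delta_m1 e lam d <= tDelta_m1 (deg e) alpha lam d,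
      Delta_p1 e lam d <= tDelta_p1 (deg e) alpha lam d &
      expected_change e lam d <=
        tDelta_m1 (deg e) alpha lam d + tDelta_p1 (deg e) alpha lam d].
Proof.
move=> [hsym hirr] [x0 [y0 hxy0]] /andP [ha0 ha1] hexp /andP [hl0 hl1] _.
have hl : 0 <= lam by exact: ltW.
have hD : 0 < \sum_x (deg e x : R).
  rewrite -D_eq // ltr0n; apply/card_gt0P; exists (x0, y0); by rewrite inE.
pose f z := ch lam (z - 1) - ch lam z.
pose g z := ch lam (z + 1) - ch lam z.
have fhi : forall x y, f (d (hi d x y)) = (f (d x) + f (d y)) / 2 - `|f (d x) - f (d y)| / 2.
  move=> x y; rewrite /hi; case: ifP => h.
    by apply: mid_l; apply: f_anti.
  by apply: mid_r; apply: f_anti => //; apply: ltW; rewrite ltNge h.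
have glo : forall x y, g (d (lo d x y)) = (g (d x) + g (d y)) / 2 - `|g (d x) - g (d y)| / 2.
  move=> x y; rewrite /lo; case: ifP => h.
    by apply: mid_r; apply: g_mono.
  by apply: mid_l; apply: g_mono => //; apply: ltW; rewrite ltNge h.
have hLf : alpha * (\sum_u \sum_v deg e u * deg e v * `|f (d u) - f (d v)|)
  <= (\sum_x deg e x) * \sum_(p : V * V | e p.1 p.2) `|f (d p.1) - f (d p.2)|.
  have := @L1ineq R V e hsym alpha (fun z => - f z) d _ ha0 hexp.
  have e1 : forall a b : R, `|- a - - b| = `|a - b| by move=> a b; rewrite -opprD normrN.
  under eq_bigr => u _ do under eq_bigr => v _ do rewrite e1.
  under [X in _ <= _ * X]eq_bigr => p _ do rewrite e1.
  apply; move=> a b hab; rewrite lerN2; exact: f_anti.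
have hLg : alpha * (\sum_u \sum_v deg e u * deg e v * `|g (d u) - g (d v)|)
  <= (\sum_x deg e x) * \sum_(p : V * V | e p.1 p.2) `|g (d p.1) - g (d p.2)|.
  apply: L1ineq => //; move=> a b hab; exact: g_mono.
have hA : Delta_m1 e lam d <= tDelta_m1 (deg e) alpha lam d.
  have := @Gen R V e hsym alpha (fun v => f (d v)) hD hLf.
  have -> : Delta_m1 e lam d = edge_mean e (fun x y => (f (d x) + f (d y)) / 2 - `|f (d x) - f (d y)| / 2).
    by apply: mean_ext => x y _; rewrite -fhi.
  suff -> : tDelta_m1 (deg e) alpha lam d = \sum_u \sum_v wprob (deg e) u * wprob (deg e) v *
      ((1 - alpha) / 2 * (f (d u) + f (d v)) + alpha * ((f (d u) + f (d v)) / 2 - `|f (d u) - f (d v)| / 2)) by [].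
  apply: eq_bigr => u _; apply: eq_bigr => v _; by rewrite -fhi.
have hB : Delta_p1 e lam d <= tDelta_p1 (deg e) alpha lam d.
  have := @Gen R V e hsym alpha (fun v => g (d v)) hD hLg.
  have -> : Delta_p1 e lam d = edge_mean e (fun x y => (g (d x) + g (d y)) / 2 - `|g (d x) - g (d y)| / 2).
    by apply: mean_ext => x y _; rewrite -glo.
  suff -> : tDelta_p1 (deg e) alpha lam d = \sum_u \sum_v wprob (deg e) u * wprob (deg e) v *
      ((1 - alpha) / 2 * (g (d u) + g (d v)) + alpha * ((g (d u) + g (d v)) / 2 - `|g (d u) - g (d v)| / 2)) by [].
  apply: eq_bigr => u _; apply: eq_bigr => v _; by rewrite -glo [g (d v) + _]addrC.
split => //.
suff -> : expected_change e lam d = Delta_m1 e lam d + Delta_p1 e lam d by exact: lerD.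
rewrite /Delta_m1 /Delta_p1 mean_add; apply: mean_ext => x y hxy.
have hne : hi d x y != lo d x y.
  rewrite /hi /lo; case: ifP => _; apply/eqP => h; move: hxy; rewrite h ?hsym; by rewrite (negbTE (hirr _)).
rewrite /Phi -sumrB (bigD1 (hi d x y)) //= (bigD1 (lo d x y)) /=; last by rewrite eq_sym.
rewrite big1 ?addr0; last first.
  move=> v /andP [h1 h2]; rewrite /step (negbTE h1) (negbTE h2) /=.
  by rewrite subr0 addr0 subrr.
rewrite /step eqxx (negbTE hne) eq_sym (negbTE hne) eqxx /=.
by rewrite subr0 addr0.
Qed.
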